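(* For $p=1$ and any $N\ge 1$ and $d\in\mathbb{R}$, the characteristic polynomial of $\mathbf{M}^{-1}\mathbf{K}$ is $$\det\bigl(\lambda I-\mathbf{M}^{-1}\mathbf{K}\bigr)=\bigl(\lambda^2+4\lambda+6\bigr)^{N-1}\bigl(\lambda^2-6\lambda d+4\lambda+6\bigr).$$
   Context: Setting: the linear advection equation $\partial_t u+\partial_x u=s(x)$ (velocity $1$) with a Dirichlet condition $u=u_D$ at the left physical boundary $\bar x$. Uniform mesh of cells $\Omega_e=[x_{e-1/2},x_{e+1/2}]$, $e=1,\dots,N$, with $x_{1/2}=0$ and cell size $\Delta x=1$. On each cell the approximation space is $\mathbb{P}^p(\Omega_e)$ with basis $\{\phi^e_j\}_{j=0}^p$, where $\phi^e_j(x)=\phi_j(x-(e-1))$ are translates of a fixed basis $\{\phi_j\}$ of $\mathbb{P}^p$ on $[0,1]$. Local matrices (indices $i,j=0,\dots,p$, identical for all cells by translation): mass $M_{ij}=\int_{\Omega_e}\phi^e_i\phi^e_j\,dx$; stiffness $K^s_{ij}=\int_{\Omega_e}\partial_x\phi^e_i\,\phi^e_j\,dx$; right interface $K^R_{ij}=\phi^e_i(x_{e+1/2})\phi^e_j(x_{e+1/2})$; left interface coupling $(K^L)_{ij}=\phi^e_i(x_{e-1/2})\phi^{e-1}_j(x_{e-1/2})$. The physical boundary is at $\bar x = x_{1/2}+d$, with $d\in[-1,1]$ ($d<0$: outside the first cell, $d>0$: inside). Shifted boundary polynomial correction with homogeneous data $u_D=0$: the upwind flux at $x_{1/2}$ is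 $u^\star=-\bigl(u_h(x_{1/2}+d)-u_h(x_{1/2})\bigr)$, with $u_h$ the (polynomially extended) solution of cell 1, giving the matrix $K^{SB}_{ij}=-\phi^1_i(x_{1/2})\bigl(\phi^1_j(x_{1/2}+d)-\phi^1_j(x_{1/2})\bigr)$. The semi-discrete system is $\mathbf{M}\,\frac{d\mathbf{U}}{dt}=\mathbf{K}\mathbf{U}$ with $\mathbf{U}=(\mathbf{u}_1,\dots,\mathbf{u}_N)$ the modal coefficient vectors, $\mathbf{M}=\mathrm{diag}(M,\dots,M)$, and $\mathbf{K}$ block lower bidiagonal with diagonal blocks $K^s-K^R+K^{SB}$ (cell 1) and $K^s-K^R$ (cells $2,\dots,N$), subdiagonal blocks $K^L$, all other blocks zero. *)

(* Defs.v *)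
From mathcomp Require Import all_boot all_order all_algebra.
Set Implicit Arguments. Unset Strict Implicit. Unset Printing Implicit Defensive.
Import Order.TTheory GRing.Theory Num.Theory.
Local Open Scope ring_scope.

Definition pint01 (R : fieldType) (q : {poly R}) : R :=
  \sum_(i < size q) q`_i / (i.+1)%:R.

(* phi : 'I_(p+1) -> {poly R} is a basis of P^p, viewed on the reference cell
   [0,1]; cell e (1-based) is [e-1,e] and phi^e_j(x) = phi_j(x-(e-1)).
   With Delta x = 1, x_{e-1/2} corresponds to 0 and x_{e+1/2} to 1 in the
   reference variable. *)
Definition is_basisP (R : fieldType) (p : nat) (phi : 'I_p.+1 -> {poly R}) :=
  (forall i, (size (phi i) <= p.+1)%N) /\
  (forall c : 'I_p.+1 -> R, \sum_i c i *: phi i = 0 -> forall i, c i = 0).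

Section Local.
Variables (R : fieldType) (p : nat) (phi : 'I_p.+1 -> {poly R}) (d : R).

Definition massM : 'M[R]_p.+1 := \matrix_(i, j) pint01 (phi i * phi j).
Definition stiffKs : 'M[R]_p.+1 := \matrix_(i, j) pint01 ((phi i)^`() * phi j).
Definition KR : 'M[R]_p.+1 := \matrix_(i, j) ((phi i).[1] * (phi j).[1]).
(* phi^e_i(x_{e-1/2}) phi^{e-1}_j(x_{e-1/2}) *)
Definition KL : 'M[R]_p.+1 := \matrix_(i, j) ((phi i).[0] * (phi j).[1]).
(* -phi^1_i(x_{1/2}) (phi^1_j(x_{1/2}+d) - phi^1_j(x_{1/2})) *)
Definition KSB : 'M[R]_p.+1 :=
  \matrix_(i, j) (- ((phi i).[0] * ((phi j).[d] - (phi j).[0]))).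

(* Global matrices on N cells; global index g <-> (cell g %/ (p+1), local g %% (p+1)),
   cells numbered from 0 here (cell 0 is the paper's cell 1). *)
Definition cellof (N : nat) (g : 'I_(N * p.+1)) : nat := g %/ p.+1.
Definition locof (N : nat) (g : 'I_(N * p.+1)) : 'I_p.+1 := inord (g %% p.+1).

Definition globM (N : nat) : 'M[R]_(N * p.+1) :=
  \matrix_(g, h) (if cellof g == cellof h then massM (locof g) (locof h) else 0).

Definition globK (N : nat) : 'M[R]_(N * p.+1) :=
  \matrix_(g, h)
    (if cellof g == cellof h then
       (stiffKs - KR + (if cellof g == 0%N then KSB else 0)) (locof g) (locof h)
     else if cellof g == (cellof h).+1 then KL (locof g) (locof h)
     else 0).
End Local.

(* Main.v *)
Require Import Defs.
From mathcomp Require Import all_boot all_order all_algebra.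
From mathcomp Require Import ring.
Set Implicit Arguments. Unset Strict Implicit. Unset Printing Implicit Defensive.
Import GRing.Theory Num.Theory.
Local Open Scope ring_scope.

Section Glob.
Variable R : comNzRingType.

Definition Gm n (B0 B L : 'M[R]_2) : 'M[R]_(n * 2) :=
  \matrix_(g, h) (if @cellof 1 n g == cellof h then
       (if cellof g == 0%N then B0 else B) (locof g) (locof h)
     else if cellof g == (cellof h).+1 then L (locof g) (locof h)
     else 0).

Definition Lb n (L : 'M[R]_2) : 'M[R]_(n * 2, 2) :=
  \matrix_(g, h) (if @cellof 1 n g == 0%N then L (locof g) h else 0).

Lemma divS2 k : ((2 + k) %/ 2 = (k %/ 2).+1)%N.
Proof. by rewrite divnDl // divnn add1n. Qed.
Lemma modS2 k : ((2 + k) %% 2 = k %% 2)%N.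
Proof. by rewrite modnDl. Qed.

Lemma Gm_S n B0 B L :
  Gm n.+1 B0 B L = block_mx B0 0 (Lb n L) (Gm n B B L).
Proof.
apply/matrixP => i j.
rewrite -[i](@splitK 2 (n*2)) -[j](@splitK 2 (n*2)).
case: (split i) => i0; case: (split j) => j0 /=.
- rewrite [LHS]mxE /cellof /locof /= !(divn_small (ltn_ord i0)) !(divn_small (ltn_ord j0)).
  rewrite !(modn_small (ltn_ord i0)) !(modn_small (ltn_ord j0)) !inord_val.
  exact: (esym (block_mxEul _ _ _ _ _ _)).
- rewrite [LHS]mxE /cellof /locof /= divS2 (divn_small (ltn_ord i0)).
  transitivity ((0 : 'M[R]_(2, n*2)) i0 j0); first by rewrite mxE.
  exact: (esym (block_mxEur _ _ _ _ _ _)).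
- rewrite [LHS]mxE /cellof /locof /= divS2 (divn_small (ltn_ord j0)) modS2.
  rewrite (modn_small (ltn_ord j0)) inord_val eqSS.
  transitivity (Lb n L i0 j0); last exact: (esym (block_mxEdl _ _ _ _ _ _)).
  by rewrite mxE /cellof /locof /=.
- rewrite [LHS]mxE /cellof /locof /= !divS2 !modS2 !eqSS.
  transitivity (Gm n B B L i0 j0); last exact: (esym (block_mxEdr _ _ _ _ _ _)).
  by rewrite mxE /cellof /locof /= if_same.
Qed.

Lemma M00 m (A B : 'M[R]_(0 * 2, m)) : A = B.
Proof. by apply/matrixP => -[]. Qed.

Lemma Lb_S n L : Lb n.+1 L = col_mx L 0.
Proof.
apply/matrixP => i j.
rewrite -[i](@splitK 2 (n*2)).
case: (split i) => i0 /=.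
- rewrite [LHS]mxE /cellof /locof /= !(divn_small (ltn_ord i0)).
  rewrite !(modn_small (ltn_ord i0)) !inord_val.
  exact: (esym (col_mxEu _ _ _ _)).
- rewrite [LHS]mxE /cellof /locof /= divS2.
  transitivity ((0 : 'M[R]_(n*2, 2)) i0 j); first by rewrite mxE.
  exact: (esym (col_mxEd _ _ _ _)).
Qed.

Lemma Lb0 n : Lb n 0 = 0.
Proof. by apply/matrixP => i j; rewrite !mxE; case: ifP. Qed.

Lemma det_Gm_same n B L : \det (Gm n B B L) = \det B ^+ n.
Proof.
elim: n => [|n IH]; first by rewrite expr0; exact: det_mx00.
rewrite Gm_S exprS -IH -[(n.+1 * 2)%N]/(2 + n*2)%N.
exact: det_lblock.
Qed.

Lemma det_Gm n B0 B L : \det (Gm n.+1 B0 B L) = \det B0 * \det B ^+ n.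
Proof.
rewrite Gm_S -(det_Gm_same n B L) -[(n.+1 * 2)%N]/(2 + n*2)%N.
exact: det_lblock.
Qed.

Lemma mul_Gm_Lb n A L : Gm n A A 0 *m Lb n L = Lb n (A *m L).
Proof.
case: n => [|n]; first exact: M00.
rewrite Gm_S !Lb_S -[(n.+1 * 2)%N]/(2 + n*2)%N.
by rewrite mul_block_col Lb0 !mul0mx !mulmx0 !addr0.
Qed.

Lemma mul_Gm n A B0 B L :
  Gm n A A 0 *m Gm n B0 B L = Gm n (A *m B0) (A *m B) (A *m L).
Proof.
elim: n B0 => [|n IH] B0; first exact: M00.
rewrite !Gm_S -[(n.+1 * 2)%N]/(2 + n*2)%N.
rewrite mulmx_block Lb0 !mul0mx !mulmx0 !addr0 !add0r.
by rewrite IH mul_Gm_Lb.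
Qed.

Lemma Gm1 n : Gm n 1%:M 1%:M 0 = 1%:M.
Proof.
elim: n => [|n IH]; first exact: M00.
rewrite Gm_S IH Lb0 -[(n.+1 * 2)%N]/(2 + n*2)%N.
by rewrite -scalar_mx_block.
Qed.
End Glob.


Section Char.
Variable R : comNzRingType.

Lemma Lb_charmx n (L : 'M[R]_2) :
  0 - map_mx polyC (Lb n L) = Lb n (- map_mx polyC L).
Proof. apply/matrixP => i j; by rewrite !mxE; case: ifP; rewrite ?sub0r ?oppr0. Qed.

Lemma charmx_Gm n (B0 B L : 'M[R]_2) :
  char_poly_mx (Gm n B0 B L) =
  Gm n (char_poly_mx B0) (char_poly_mx B) (- map_mx polyC L).
Proof.
elim: n B0 => [|n IH] B0; first exact: M00.
rewrite /char_poly_mx !Gm_S -[(n.+1 * 2)%N]/(2 + n*2)%N.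
rewrite map_block_mx (scalar_mx_block 2 (n*2)) opp_block_mx add_block_mx.
by rewrite Lb_charmx map_mx0 subr0 -(IH B).
Qed.

Lemma char_poly_Gm n (B0 B L : 'M[R]_2) :
  char_poly (Gm n.+1 B0 B L) = char_poly B0 * char_poly B ^+ n.
Proof. by rewrite /char_poly charmx_Gm det_Gm. Qed.
End Char.
Section Two.
Variable R : comNzRingType.

Lemma lift00 : lift (0 : 'I_2) (0 : 'I_1) = 1.
Proof. exact/val_inj. Qed.
Lemma lift10 : lift (1 : 'I_2) (0 : 'I_1) = 0.
Proof. exact/val_inj. Qed.

Lemma det2 (A : 'M[R]_2) : \det A = A 0 0 * A 1 1 - A 0 1 * A 1 0.
Proof.
rewrite (expand_det_row _ 0) !big_ord_recl big_ord0 /cofactor !det_mx11 !mxE /=.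
rewrite lift00 lift10 /bump /= !add0n addn0 expr0 expr1 addr0 mul1r mulN1r.
have -> : (ord0 : 'I_2) = 0 by [].
by rewrite mulrN.
Qed.
End Two.
Section Two2.
Variable R : comNzRingType.
Lemma char2 (A : 'M[R]_2) : char_poly A =
  'X^2 - (A 0 0 + A 1 1) *: 'X + (A 0 0 * A 1 1 - A 0 1 * A 1 0)%:P.
Proof.
rewrite /char_poly det2 /char_poly_mx !mxE /= !mulr1n !mulr0n.
rewrite -mul_polyC polyCB polyCD !polyCM. ring.
Qed.
End Two2.

Section Loc.
Variable F : realFieldType.

Lemma pint01_widen n (q : {poly F}) : (size q <= n)%N ->
  pint01 q = \sum_(i < n) q`_i / i.+1%:R.
Proof.
move=> hn; rewrite /pint01 (big_ord_widen n (fun i => q`_i / i.+1%:R)) //.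
rewrite big_mkcond; apply: eq_bigr => i _; case: ifP => // /negbT.
by rewrite -leqNgt => h; rewrite nth_default // mul0r.
Qed.

Lemma pintQ (c0 c1 c2 : F) :
  pint01 (c0%:P + c1%:P * 'X + c2%:P * 'X^2) = c0 + c1 / 2%:R + c2 / 3%:R.
Proof.
have cE : forall k, (c0%:P + c1%:P * 'X + c2%:P * 'X^2)`_k =
   c0 * (k == 0)%:R + c1 * (k == 1)%:R + c2 * (k == 2)%:R.
  by move=> k; rewrite !coefD !coefCM coefC coefX coefXn; case: (k == 0); rewrite ?mulr1 ?mulr0.
rewrite (@pint01_widen 3); last first.
  apply/leq_sizeP => j hj; rewrite cE.
  by case: j hj => [|[|[|j]]] //= _; rewrite !mulr0 !addr0.
rewrite !big_ord_recl big_ord0 !cE /=.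
by rewrite /bump /= !mulr1 !mulr0 !addr0 !add0r divr1 addrA.
Qed.

Lemma phiE (q : {poly F}) : (size q <= 2)%N -> q = (q`_0)%:P + (q`_1)%:P * 'X.
Proof.
move=> hs; apply/polyP => k; rewrite coefD coefCM coefC coefX.
case: k => [|[|k]] /=; rewrite ?mulr1 ?mulr0 ?addr0 ?add0r //.
by rewrite nth_default // (leq_trans hs).
Qed.
End Loc.

Section Inv.
Variable F : fieldType.

Lemma mul2E (A B : 'M[F]_2) i j : (A *m B) i j = A i 0 * B 0 j + A i 1 * B 1 j.
Proof.
rewrite mxE !big_ord_recl big_ord0 addr0.
by have -> : lift ord0 (ord0 : 'I_1) = 1 :> 'I_2 by exact/val_inj.
Qed.

Lemma char_invmul (M K : 'M[F]_2) : \det M != 0 ->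
  char_poly (invmx M *m K) =
  'X^2 - ((M 1 1 * K 0 0 - M 0 1 * K 1 0 - M 1 0 * K 0 1 + M 0 0 * K 1 1) / \det M) *: 'X
  + ((K 0 0 * K 1 1 - K 0 1 * K 1 0) / \det M)%:P.
Proof.
move=> hM; rewrite char2 -det2 det_mulmx det_inv mulrC (det2 K).
congr (_ - _ *: _ + _).
have hu : M \in unitmx by rewrite unitmxE unitfE.
rewrite !mul2E /invmx hu !mxE /cofactor !det_mx11 !mxE /=.
rewrite lift00 lift10 /bump /=.
have e : (1 %% 2 = 1)%N by [].
rewrite e !addn0 !add0n expr0 expr1 -[(1+1)%N]/2%N expr2 mulrNN mulr1.
by field.
Qed.
End Inv.

Section Main.
Variable F : realFieldType.
Variable phi : 'I_2 -> {poly F}.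
Hypothesis hb : is_basisP phi.

Let hs i : (size (phi i) <= 2)%N := hb.1 i.
Local Notation a i := ((phi i)`_0).
Local Notation b i := ((phi i)`_1).

Lemma l01 : lift ord0 (ord0 : 'I_1) = 1 :> 'I_2.
Proof. exact/val_inj. Qed.

Lemma indep c0 c1 : c0 * a 0 + c1 * a 1 = 0 -> c0 * b 0 + c1 * b 1 = 0 ->
  c0 = 0 /\ c1 = 0.
Proof.
move=> h0 h1.
pose c := fun i : 'I_2 => if val i == 0%N then c0 else c1.
have H := hb.2 c.
have hsum : \sum_i c i *: phi i = 0.
  rewrite !big_ord_recl big_ord0 addr0 l01 /c /=.
  apply/polyP => k; rewrite coefD !coefZ coef0.
  case: k => [|[|k]]; first exact: h0; first exact: h1.
  by rewrite !nth_default ?mulr0 ?addr0 // (leq_trans (hs _)).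
split; first exact: (H hsum 0).
exact: (H hsum 1).
Qed.

Lemma detA_ne0 : a 0 * b 1 - a 1 * b 0 != 0.
Proof.
apply/eqP => h.
have [ha|ha] := boolP ((a 0 != 0) || (a 1 != 0)).
  have [e1 e2] : a 1 = 0 /\ - a 0 = 0.
    apply: indep; first by ring.
    by transitivity (- (a 0 * b 1 - a 1 * b 0)); [ring | rewrite h oppr0].
  by move: ha; rewrite e1 -oppr_eq0 e2 eqxx.
move: ha; rewrite negb_or !negbK => /andP [/eqP a0 /eqP a1].
have [e1 e2] : b 1 = 0 /\ - b 0 = 0.
  by apply: indep; [rewrite a0 a1; ring | ring].
have [] := @indep 1 0.
- by rewrite a0; ring.
- by move/eqP: e2; rewrite oppr_eq0 => /eqP ->; ring.
by move/eqP; rewrite oner_eq0.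
Qed.

Lemma pint_mul i j : pint01 (phi i * phi j) =
  a i * a j + (a i * b j + b i * a j) / 2%:R + b i * b j / 3%:R.
Proof.
rewrite -pintQ; congr pint01.
rewrite {1}(phiE (hs i)) {1}(phiE (hs j)) !polyCD !polyCM; ring.
Qed.

Lemma pint_der i j : pint01 ((phi i)^`() * phi j) =
  b i * a j + b i * b j / 2%:R.
Proof.
have -> : (phi i)^`() * phi j = (b i * a j)%:P + (b i * b j)%:P * 'X + 0%:P * 'X^2.
  rewrite {1}(phiE (hs i)) {1}(phiE (hs j)) derivD derivC deriv_mulC derivX.
  rewrite add0r mulr1 !polyCM; ring.
by rewrite pintQ mul0r addr0.
Qed.

Lemma horn i x : (phi i).[x] = a i + b i * x.
Proof. by rewrite {1}(phiE (hs i)) !hornerE. Qed.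

Lemma detM_ne0 : \det (massM phi) != 0.
Proof.
rewrite det2 !mxE !pint_mul.
have h2 : 2%:R != 0 :> F by rewrite pnatr_eq0.
have h3 : 3%:R != 0 :> F by rewrite pnatr_eq0.
have -> : (a 0 * a 0 + (a 0 * b 0 + b 0 * a 0) / 2%:R + b 0 * b 0 / 3%:R) *
  (a 1 * a 1 + (a 1 * b 1 + b 1 * a 1) / 2%:R + b 1 * b 1 / 3%:R) -
  (a 0 * a 1 + (a 0 * b 1 + b 0 * a 1) / 2%:R + b 0 * b 1 / 3%:R) *
  (a 1 * a 0 + (a 1 * b 0 + b 1 * a 0) / 2%:R + b 1 * b 0 / 3%:R) =
  (a 0 * b 1 - a 1 * b 0) ^+ 2 / 12%:R.
  by field.
by rewrite mulf_eq0 negb_or expf_eq0 /= detA_ne0 invr_eq0 pnatr_eq0.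
Qed.

Lemma nz3 (E : F) : E = 3%:R * (a 0 * b 1 - a 1 * b 0) ^+ 2 -> E != 0.
Proof.
move=> ->; rewrite mulf_eq0 negb_or pnatr_eq0 /= expf_eq0 /=.
exact: detA_ne0.
Qed.

Lemma char1 : char_poly (invmx (massM phi) *m (stiffKs phi - KR phi)) =
  'X^2 + 4%:R *: 'X + 6%:R%:P.
Proof.
have hD := detM_ne0.
rewrite char_invmul // -scaleNr.
move: hD; rewrite det2 /massM /stiffKs /KR !mxE !pint_mul => hD.
congr (_ + _ *: _ + _%:P); rewrite ?mxE !pint_der !horn.
  by field; apply: nz3; ring.
by field; apply: nz3; ring.
Qed.

Lemma char0 (d : F) :
  char_poly (invmx (massM phi) *m (stiffKs phi - KR phi + KSB phi d)) =
  'X^2 + (4%:R - 6%:R * d) *: 'X + 6%:R%:P.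
Proof.
have hD := detM_ne0.
rewrite char_invmul // -scaleNr.
move: hD; rewrite det2 /massM /stiffKs /KR /KSB !mxE !pint_mul => hD.
congr (_ + _ *: _ + _%:P); rewrite ?mxE !pint_der !horn.
  by field; apply: nz3; ring.
by field; apply: nz3; ring.
Qed.
End Main.

Unset Implicit Arguments.
Theorem mainTheorem2 (R : realFieldType) (phi : 'I_2 -> {poly R}) (N : nat) (d : R) :
  is_basisP phi -> (1 <= N)%N ->
  char_poly (invmx (globM phi N) *m globK phi d N) =
  ('X^2 + 4%:R *: 'X + 6%:R%:P) ^+ (N - 1) *
  ('X^2 - (6%:R * d) *: 'X + 4%:R *: 'X + 6%:R%:P).
Proof.
move=> hb hN.
have eM : globM phi N = Gm N (massM phi) (massM phi) 0.
  apply/matrixP => g h; rewrite !mxE; case: ifP => _.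
    by rewrite if_same mxE.
  by rewrite if_same.
have eK : globK phi d N =
    Gm N (stiffKs phi - KR phi + KSB phi d) (stiffKs phi - KR phi) (KL phi).
  apply/matrixP => g h; rewrite !mxE; case: ifP => _ //.
  by case: ifP => _; rewrite ?mxE ?addr0.
have hu : massM phi \in unitmx by rewrite unitmxE unitfE detM_ne0.
have h1 : Gm N (invmx (massM phi)) (invmx (massM phi)) 0 *m
          Gm N (massM phi) (massM phi) 0 = 1%:M.
  by rewrite mul_Gm mulVmx // mulmx0 Gm1.
have [_ hX] := mulmx1_unit h1.
have hinv : invmx (Gm N (massM phi) (massM phi) 0) =
    Gm N (invmx (massM phi)) (invmx (massM phi)) 0.
  by rewrite -[LHS]mul1mx -h1 -mulmxA mulmxV // mulmx1.
rewrite eM eK hinv.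
rewrite mul_Gm.
clear eM eK hinv h1 hX; case: N hN => // n _.
rewrite char_poly_Gm char0 // char1 // subn1 /= mulrC.
congr (_ * _).
rewrite scalerBl; ring.
Qed.
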